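(* For $n\in\mathbb{Z}^+$ we have $$\begin{aligned}&t(1,4,15;n)=2N(1,4,15;2n+5)&&\text{for } n\equiv 0\pmod 4,\\ &t(1,12,15;n)=2N(1,12,15;2n+7)&&\text{for } n\equiv 2\pmod 4,\\ &t(1,15,20;n)=2N(1,15,20;2n+9)&&\text{for } n\equiv 2\pmod 4,\\ &t(3,4,45;n)=2N(3,4,45;2n+13)&&\text{for } n\equiv 2\pmod 4.\end{aligned}$$
   Context: $\mathbb{Z}^+$ is the set of positive integers. For $a,b,c\in\mathbb{Z}^+$ and nonnegative integer $n$, $N(a,b,c;n)$ denotes the number of triples $(x,y,z)\in\mathbb{Z}^3$ with $n=ax^2+by^2+cz^2$, and $t(a,b,c;n)$ denotes the number of triples $(x,y,z)\in\mathbb{Z}^3$ with $n=a\frac{x(x+1)}2+b\frac{y(y+1)}2+c\frac{z(z+1)}2$. *)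

(* Defs.v *)
From Stdlib Require Import ZArith List.
Import ListNotations.
Open Scope Z_scope.

Definition zbox (B : nat) : list Z :=
  map (fun k => Z.of_nat k - Z.of_nat B) (seq 0 (2 * B + 1)).

Definition count3 (B : nat) (P : Z -> Z -> Z -> bool) : nat :=
  length (filter (fun t => match t with (x, (y, z)) => P x y z end)
    (list_prod (zbox B) (list_prod (zbox B) (zbox B)))).

(* N(a,b,c;n) = #{(x,y,z) in Z^3 : n = a x^2 + b y^2 + c z^2}, for a,b,c >= 1, n >= 0.
   Every solution satisfies |x|,|y|,|z| <= n, so counting in the box
   [-(n+1), n+1]^3 counts all solutions in Z^3. *)
Definition Nrep (a b c n : Z) : nat :=
  count3 (Z.to_nat n + 1)
    (fun x y z => Z.eqb n (a * x ^ 2 + b * y ^ 2 + c * z ^ 2)).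

(* triangular number x(x+1)/2 (exact division since x(x+1) is even) *)
Definition tri (x : Z) : Z := x * (x + 1) / 2.

(* t(a,b,c;n) = #{(x,y,z) in Z^3 : n = a T(x) + b T(y) + c T(z)}.  For a,b,c >= 1
   every solution has T(x) <= n, which forces |x| <= n + 1, so the box
   [-(n+1), n+1]^3 contains all solutions. *)
Definition trep (a b c n : Z) : nat :=
  count3 (Z.to_nat n + 1)
    (fun x y z => Z.eqb n (a * tri x + b * tri y + c * tri z)).

(* Main.v *)
Require Import Defs.
From Stdlib Require Import ZArith List Lia.
Import ListNotations.
Open Scope Z_scope.


Lemma NoDup_prod {A B} (l : list A) (m : list B) :
  NoDup l -> NoDup m -> NoDup (list_prod l m).
Proof.
  intros Hl Hm; induction Hl as [|a l Ha Hl IH]; simpl; [constructor|].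
  apply NoDup_app; auto.
  - apply NoDup_map_NoDup_ForallPairs; auto.
    intros u v _ _ H; now inversion H.
  - intros [p q] H1 H2. apply in_map_iff in H1 as [b [Hb _]]. inversion Hb; subst.
    apply in_prod_iff in H2 as [H2 _]. contradiction.
Qed.

Lemma NoDup_zbox B : NoDup (zbox B).
Proof.
  unfold zbox. apply NoDup_map_NoDup_ForallPairs; [|apply seq_NoDup].
  intros u v _ _ H. lia.
Qed.

Lemma in_zbox B k : In k (zbox B) <-> - Z.of_nat B <= k <= Z.of_nat B.
Proof.
  unfold zbox. rewrite in_map_iff. split.
  - intros [j [Hj Hin]]. apply in_seq in Hin. lia.
  - intros H. exists (Z.to_nat (k + Z.of_nat B)). rewrite in_seq. lia.
Qed.

Lemma filter_bij {A B} (l1 : list A) (l2 : list B) (P : A -> bool) (Q : B -> bool)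
  (f : A -> B) (g : B -> A) :
  NoDup l1 -> NoDup l2 ->
  (forall a, In a l1 -> P a = true -> In (f a) l2 /\ Q (f a) = true /\ g (f a) = a) ->
  (forall b, In b l2 -> Q b = true -> In (g b) l1 /\ P (g b) = true /\ f (g b) = b) ->
  length (filter P l1) = length (filter Q l2).
Proof.
  intros N1 N2 Hf Hg.
  assert (NA : NoDup (filter P l1)) by now apply NoDup_filter.
  assert (NB : NoDup (filter Q l2)) by now apply NoDup_filter.
  assert (EA : map g (map f (filter P l1)) = filter P l1).
  { rewrite map_map. rewrite <- map_id. apply map_ext_in. intros a Ha.
    apply filter_In in Ha as [H1 H2]. now apply Hf. }
  assert (EB : map f (map g (filter Q l2)) = filter Q l2).
  { rewrite map_map. rewrite <- map_id. apply map_ext_in. intros a Ha.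
    apply filter_In in Ha as [H1 H2]. now apply Hg. }
  apply Nat.le_antisymm.
  - rewrite <- (length_map f). apply NoDup_incl_length.
    + apply (NoDup_map_inv g). now rewrite EA.
    + intros b Hb. apply in_map_iff in Hb as [a [<- Ha]].
      apply filter_In in Ha as [H1 H2]. apply filter_In. split; apply Hf; auto.
  - rewrite <- (length_map g). apply NoDup_incl_length.
    + apply (NoDup_map_inv f). now rewrite EB.
    + intros b Hb. apply in_map_iff in Hb as [a [<- Ha]].
      apply filter_In in Ha as [H1 H2]. apply filter_In. split; apply Hg; auto.
Qed.

Lemma filter_double {A} (l : list A) (Q : A -> bool) :
  length (filter (fun p : A * bool => Q (fst p)) (list_prod l [true; false]))
  = (2 * length (filter Q l))%nat.
Proof.
  induction l as [|a l IH]; simpl; auto.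
  destruct (Q a); simpl; rewrite IH; lia.
Qed.

Definition trip := (Z * (Z * Z))%type.
Definition ap3 (P : Z -> Z -> Z -> bool) (t : trip) : bool :=
  match t with (x, (y, z)) => P x y z end.

Lemma count3_eq B P : count3 B P = length (filter (ap3 P)
   (list_prod (zbox B) (list_prod (zbox B) (zbox B)))).
Proof. unfold count3. f_equal. Qed.

Lemma count_bij2 (B1 B2 : nat) (P Q : Z -> Z -> Z -> bool)
  (f : trip -> trip * bool) (g : trip * bool -> trip) :
  (forall x y z, P x y z = true ->
     - Z.of_nat B1 <= x <= Z.of_nat B1 /\ - Z.of_nat B1 <= y <= Z.of_nat B1 /\
     - Z.of_nat B1 <= z <= Z.of_nat B1) ->
  (forall x y z, Q x y z = true ->
     - Z.of_nat B2 <= x <= Z.of_nat B2 /\ - Z.of_nat B2 <= y <= Z.of_nat B2 /\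
     - Z.of_nat B2 <= z <= Z.of_nat B2) ->
  (forall w, ap3 P w = true -> ap3 Q (fst (f w)) = true /\ g (f w) = w) ->
  (forall v s, ap3 Q v = true -> ap3 P (g (v, s)) = true /\ f (g (v, s)) = (v, s)) ->
  count3 B1 P = (2 * count3 B2 Q)%nat.
Proof.
  intros BP BQ Hf Hg. rewrite !count3_eq, <- filter_double.
  apply filter_bij with (f := f) (g := g).
  - repeat apply NoDup_prod; apply NoDup_zbox.
  - repeat apply NoDup_prod; try apply NoDup_zbox.
    repeat constructor; simpl; intuition discriminate.
  - intros w _ Hw. destruct (Hf w Hw) as [H1 H2]. split; [|split]; auto.
    destruct (f w) as [[v1 [v2 v3]] s]. simpl in *.
    destruct (BQ _ _ _ H1) as [? [? ?]].
    apply in_prod_iff; split; [|destruct s; simpl; auto].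
    repeat (apply in_prod_iff; split); apply in_zbox; auto.
  - intros [v s] _ Hv. simpl in Hv. destruct (Hg v s Hv) as [H1 H2].
    split; [|split]; auto.
    destruct (g (v, s)) as [x [y z]]. simpl in *.
    destruct (BP _ _ _ H1) as [? [? ?]].
    repeat (apply in_prod_iff; split); apply in_zbox; auto.
Qed.

Lemma tri2 x : 2 * tri x = x * (x + 1).
Proof.
  unfold tri. assert (H : exists k, x * (x + 1) = 2 * k).
  { destruct (Z.even x) eqn:E.
    - apply Z.even_spec in E as [k Hk]. exists (k * (x+1)). subst; ring.
    - assert (Z.odd x = true) by (rewrite <- Z.negb_even, E; auto).
      apply Z.odd_spec in H as [k Hk]. exists (x * (k+1)). subst; ring. }
  destruct H as [k Hk]. rewrite Hk. rewrite (Z.mul_comm 2 k), Z.div_mul by lia. lia.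
Qed.

Lemma tri_bound n x : 0 <= tri x -> tri x <= n -> - (n + 1) <= x <= n + 1.
Proof. intros. pose proof (tri2 x). nia. Qed.

Lemma tri_nonneg x : 0 <= tri x.
Proof. pose proof (tri2 x). nia. Qed.

Lemma sq_bound v : - (v * v) <= v <= v * v.
Proof. nia. Qed.

Lemma tri_odd x : (2 * x + 1) * (2 * x + 1) = 8 * tri x + 1.
Proof. pose proof (tri2 x). lia. Qed.

Lemma even_pp y : exists w, y * y + y = 2 * w.
Proof. exists (tri y). pose proof (tri2 y). lia. Qed.

Lemma boundP (a b c n x y z : Z) : 1 <= a -> 1 <= b -> 1 <= c ->
  Z.eqb n (a * tri x + b * tri y + c * tri z) = true ->
  - Z.of_nat (Z.to_nat n + 1) <= x <= Z.of_nat (Z.to_nat n + 1) /\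
  - Z.of_nat (Z.to_nat n + 1) <= y <= Z.of_nat (Z.to_nat n + 1) /\
  - Z.of_nat (Z.to_nat n + 1) <= z <= Z.of_nat (Z.to_nat n + 1).
Proof.
  intros Ha Hb Hc H. apply Z.eqb_eq in H.
  pose proof (tri_nonneg x). pose proof (tri_nonneg y). pose proof (tri_nonneg z).
  assert (0 <= n) by nia.
  rewrite Nat2Z.inj_add, Z2Nat.id by lia.
  assert (Tx : tri x <= n) by nia. assert (Ty : tri y <= n) by nia. assert (Tz : tri z <= n) by nia.
  apply tri_bound in Tx; auto. apply tri_bound in Ty; auto. apply tri_bound in Tz; auto.
Qed.

Lemma boundQ (a b c n x y z : Z) : 1 <= a -> 1 <= b -> 1 <= c ->
  Z.eqb n (a * x ^ 2 + b * y ^ 2 + c * z ^ 2) = true ->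
  - Z.of_nat (Z.to_nat n + 1) <= x <= Z.of_nat (Z.to_nat n + 1) /\
  - Z.of_nat (Z.to_nat n + 1) <= y <= Z.of_nat (Z.to_nat n + 1) /\
  - Z.of_nat (Z.to_nat n + 1) <= z <= Z.of_nat (Z.to_nat n + 1).
Proof.
  intros Ha Hb Hc H. apply Z.eqb_eq in H. rewrite !Z.pow_2_r in H.
  pose proof (sq_bound x). pose proof (sq_bound y). pose proof (sq_bound z).
  assert (0 <= x * x) by nia. assert (0 <= y * y) by nia. assert (0 <= z * z) by nia.
  assert (0 <= n) by nia.
  rewrite Nat2Z.inj_add, Z2Nat.id by lia. simpl.
  assert (x * x <= n) by nia. assert (y * y <= n) by nia. assert (z * z <= n) by nia.
  lia.
Qed.

Lemma prod48 a b t : a * b = 8 * t + 4 -> (a + b) mod 2 = 1 ->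
  (a mod 4 = 0 -> exists k, a = 4 * k /\ k mod 2 = 1) /\
  (a mod 4 <> 0 -> exists k, b = 4 * k /\ k mod 2 = 1).
Proof.
  intros H Hab.
  assert (Ha : exists q r, a = 8 * q + r /\ 0 <= r < 8) by (exists (a / 8), (a mod 8); Z.div_mod_to_equations; lia).
  assert (Hb : exists q r, b = 8 * q + r /\ 0 <= r < 8) by (exists (b / 8), (b mod 8); Z.div_mod_to_equations; lia).
  destruct Ha as [q [r [-> Hr]]], Hb as [p [r' [-> Hr']]].
  assert (r = 0 \/ r = 1 \/ r = 2 \/ r = 3 \/ r = 4 \/ r = 5 \/ r = 6 \/ r = 7) as Hr2 by lia.
  assert (r' = 0 \/ r' = 1 \/ r' = 2 \/ r' = 3 \/ r' = 4 \/ r' = 5 \/ r' = 6 \/ r' = 7) as Hr2' by lia.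
  destruct Hr2 as [->|[->|[->|[->|[->|[->|[->| ->]]]]]]];
  destruct Hr2' as [->|[->|[->|[->|[->|[->|[->| ->]]]]]]];
  split; intros; Z.div_mod_to_equations; try lia;
  first [ exists (2*q+1); Z.div_mod_to_equations; lia | exists (2*p+1); Z.div_mod_to_equations; lia ].
Qed.

Ltac zl := Z.div_mod_to_equations; lia.
Ltac dtest := match goal with |- context [Z.eqb ?a 0] =>
  lazymatch a with
  | context [Z.eqb _ _] => fail
  | _ => destruct (Z.eqb_spec a 0) as [?Hq|?Hq] end end.

Lemma tri_odd_eq X : X mod 2 = 1 -> X * X = 8 * tri ((X - 1) / 2) + 1.
Proof. intro H. rewrite <- tri_odd. f_equal; zl. Qed.

Lemma P_of_odd a b c n X Y Z : X mod 2 = 1 -> Y mod 2 = 1 -> Z mod 2 = 1 ->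
  8 * n + a + b + c = a * (X * X) + b * (Y * Y) + c * (Z * Z) ->
  Z.eqb n (a * tri ((X - 1) / 2) + b * tri ((Y - 1) / 2) + c * tri ((Z - 1) / 2)) = true.
Proof.
  intros HX HY HZ E. apply Z.eqb_eq.
  rewrite (tri_odd_eq X HX), (tri_odd_eq Y HY), (tri_odd_eq Z HZ) in E. lia.
Qed.

Ltac par t := let p := fresh "p" in let Hp := fresh "Hp" in
  destruct (Z.Even_or_Odd t) as [[p Hp]|[p Hp]]; subst t;
  try pose proof (tri2 p).

Lemma par2 v1 v2 v3 j : v1*v1 + 12*(v2*v2) + 15*(v3*v3) = 8*j+3 ->
  exists c, v1 = 2*c /\ v3 mod 2 = 1 /\ (c + v2) mod 2 = 1.
Proof.
  intro H. par v1; par v2; par v3; try lia.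
  - exists p. par p; split; try lia; split; zl.
  - exists p. par p; split; try lia; split; zl.
Qed.




Lemma prod80 a b t : a * b = 8 * t -> (a + b) mod 2 = 1 ->
  (a mod 8 = 0 -> exists k, a = 8 * k) /\
  (a mod 8 <> 0 -> exists k, b = 8 * k).
Proof.
  intros H Hab.
  assert (Ha : exists q r, a = 8 * q + r /\ 0 <= r < 8) by (exists (a / 8), (a mod 8); Z.div_mod_to_equations; lia).
  assert (Hb : exists q r, b = 8 * q + r /\ 0 <= r < 8) by (exists (b / 8), (b mod 8); Z.div_mod_to_equations; lia).
  destruct Ha as [q [r [-> Hr]]], Hb as [p [r' [-> Hr']]].
  assert (r = 0 \/ r = 1 \/ r = 2 \/ r = 3 \/ r = 4 \/ r = 5 \/ r = 6 \/ r = 7) as Hr2 by lia.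
  assert (r' = 0 \/ r' = 1 \/ r' = 2 \/ r' = 3 \/ r' = 4 \/ r' = 5 \/ r' = 6 \/ r' = 7) as Hr2' by lia.
  destruct Hr2 as [->|[->|[->|[->|[->|[->|[->| ->]]]]]]];
  destruct Hr2' as [->|[->|[->|[->|[->|[->|[->| ->]]]]]]];
  split; intros; Z.div_mod_to_equations; try lia;
  first [ exists q; lia | exists p; lia ].
Qed.

Definition f1 (w : trip) : trip * bool :=
  let '(x, (y, z)) := w in
  let sZ := Z.eqb ((x - z) mod 8) 0 in
  let Zp := if sZ then 2*z+1 else -(2*z+1) in
  let k := (2*x+1 - Zp) / 16 in
  ((2*y+1, (k + Zp, 2*k)), sZ).

Definition g1 (p : trip * bool) : trip :=
  let '((v1, (v2, v3)), s) := p in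
  let u := v3 / 2 in
  let Zp := v2 - u in
  let X := Zp + 16*u in
  let Z := if s then Zp else -Zp in
  ((X - 1)/2, ((v1 - 1)/2, (Z - 1)/2)).

Lemma F1 n (hn : n mod 4 = 0) w :
  ap3 (fun x y z => Z.eqb n (1 * tri x + 4 * tri y + 15 * tri z)) w = true ->
  ap3 (fun x y z => Z.eqb (2 * n + 5) (1 * x ^ 2 + 4 * y ^ 2 + 15 * z ^ 2)) (fst (f1 w)) = true
  /\ g1 (f1 w) = w.
Proof.
  destruct w as [x [y z]]. cbn [ap3]. intro H. apply Z.eqb_eq in H.
  pose proof (tri2 x). pose proof (tri2 y). pose proof (tri2 z).
  assert (Hj : exists j, n = 4 * j) by (exists (n / 4); zl).
  destruct Hj as [j Hj].
  assert (Hk : (x - z) * (x + z + 1) = 8 * (j - tri y - 4 * tri z)) by lia.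
  assert (Hp : (x - z + (x + z + 1)) mod 2 = 1) by zl.
  destruct (prod80 _ _ _ Hk Hp) as [B1 B2].
  unfold f1. dtest; cbv beta iota zeta.
  - destruct (B1 ltac:(assumption)) as [k Hk1]. clear B1 B2.
    replace ((2 * x + 1 - (2 * z + 1)) / 16) with k by zl.
    split.
    + apply Z.eqb_eq. assert (x = z + 8 * k) by lia. subst x. rewrite !Z.pow_2_r. lia.
    + unfold g1. f_equal; [|f_equal]; zl.
  - destruct (B2 ltac:(assumption)) as [k Hk1]. clear B1 B2.
    replace ((2 * x + 1 - - (2 * z + 1)) / 16) with k by zl.
    split.
    + apply Z.eqb_eq. assert (x = - z - 1 + 8 * k) by lia. subst x. rewrite !Z.pow_2_r. lia.
    + unfold g1. f_equal; [|f_equal]; zl.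
Qed.

Lemma par1 v1 v2 v3 j : v1*v1 + 4*(v2*v2) + 15*(v3*v3) = 8*j+5 ->
  v1 mod 2 = 1 /\ exists u, v3 = 2*u /\ (v2 + u) mod 2 = 1.
Proof.
  intro H. par v1; par v2; par v3; try lia.
  - split; [zl|]. exists p1. par p1; split; try lia; zl.
  - split; [zl|]. exists p1. par p1; split; try lia; zl.
Qed.

Lemma G1 n (hn : n mod 4 = 0) v s :
  ap3 (fun x y z => Z.eqb (2 * n + 5) (1 * x ^ 2 + 4 * y ^ 2 + 15 * z ^ 2)) v = true ->
  ap3 (fun x y z => Z.eqb n (1 * tri x + 4 * tri y + 15 * tri z)) (g1 (v, s)) = true
  /\ f1 (g1 (v, s)) = (v, s).
Proof.
  destruct v as [v1 [v2 v3]]. cbn [ap3]. intro H. apply Z.eqb_eq in H.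
  rewrite !Z.pow_2_r in H.
  assert (Hj : exists j, n = 4 * j) by (exists (n / 4); zl).
  destruct Hj as [j Hj].
  destruct (par1 v1 v2 v3 j ltac:(lia)) as [H1 [u [Hu Hu2]]].
  unfold g1. replace (v3 / 2) with u by zl.
  cbv beta iota zeta.
  split.
  - apply P_of_odd; destruct s; zl.
  - unfold f1. clear H. destruct s; cbv beta iota zeta; repeat (dtest; cbv beta iota zeta);
    try (exfalso; zl); f_equal; try f_equal; try f_equal; zl.
Qed.

Lemma case1 n : 0 < n -> n mod 4 = 0 ->
  trep 1 4 15 n = (2 * Nrep 1 4 15 (2 * n + 5))%nat.
Proof.
  intros hn hm. unfold trep, Nrep. apply count_bij2 with (f := f1) (g := g1).
  - intros x y z H. apply (boundP 1 4 15); auto; lia.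
  - intros x y z H. apply (boundQ 1 4 15); auto; lia.
  - intros w Hw. now apply F1.
  - intros v s Hv. now apply G1.
Qed.



Definition f2 (w : trip) : trip * bool :=
  let '(x, (y, z)) := w in
  let sZ := Z.eqb ((x - z) mod 4) 0 in
  let Zp := if sZ then 2*z+1 else -(2*z+1) in
  let b := (2*x+1 - Zp) / 8 in
  let a := b + 2*Zp in
  let sY := Z.eqb ((a - (2*y+1)) mod 4) 0 in
  let Yp := if sY then 2*y+1 else -(2*y+1) in
  (((a + 3*Yp)/2, ((a - Yp)/4, if sY then b else -b)), sZ).

Definition g2 (p : trip * bool) : trip :=
  let '((v1, (v2, v3)), s) := p in
  let c := v1 / 2 in
  let A := c + 3*v2 in
  let t := Z.eqb ((A - v3) mod 4) 0 in
  let u3 := if t then -v3 else v3 in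
  let Zp := (A - u3) / 2 in
  let X := Zp + 8*u3 in
  let Ypp := c - v2 in
  let Y := if t then -Ypp else Ypp in
  let Z := if s then Zp else -Zp in
  ((X - 1)/2, ((Y - 1)/2, (Z - 1)/2)).

Ltac rest2 x y k Zp xe :=
  dtest;
  [ let He := fresh "He" in let e := fresh "e" in
    assert (He : exists e, k + 2 * Zp - (2 * y + 1) = 4 * e) by (exists ((k + 2 * Zp - (2 * y + 1)) / 4); zl);
    destruct He as [e He];
    replace ((k + 2 * Zp + 3 * (2 * y + 1)) / 2) with (2 * (2*y+1+e)) by zl;
    replace ((k + 2 * Zp - (2 * y + 1)) / 4) with e by zl;
    split;
    [ apply Z.eqb_eq; assert (x = xe) by lia; assert (k = 2*y+1+4*e-2*Zp) by lia;
      subst x k; rewrite !Z.pow_2_r; lia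
    | unfold g2; replace (2 * (2 * y + 1 + e) / 2) with (2*y+1+e) by zl;
      dtest; [exfalso; zl|];
      f_equal; [|f_equal]; zl ]
  | let He := fresh "He" in let e := fresh "e" in
    assert (He : exists e, k + 2 * Zp + (2 * y + 1) = 4 * e) by (exists ((k + 2 * Zp + (2 * y + 1)) / 4); zl);
    destruct He as [e He];
    replace ((k + 2 * Zp + 3 * (- (2 * y + 1))) / 2) with (2 * (-(2*y+1)+e)) by zl;
    replace ((k + 2 * Zp - (- (2 * y + 1))) / 4) with e by zl;
    split;
    [ apply Z.eqb_eq; assert (x = xe) by lia; assert (k = -(2*y+1)+4*e-2*Zp) by lia;
      subst x k; rewrite !Z.pow_2_r; lia
    | unfold g2; replace (2 * (- (2 * y + 1) + e) / 2) with (-(2*y+1)+e) by zl;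
      dtest; [|exfalso; zl];
      f_equal; [|f_equal]; zl ] ].

Lemma F2 n (hn : n mod 4 = 2) w :
  ap3 (fun x y z => Z.eqb n (1 * tri x + 12 * tri y + 15 * tri z)) w = true ->
  ap3 (fun x y z => Z.eqb (2 * n + 7) (1 * x ^ 2 + 12 * y ^ 2 + 15 * z ^ 2)) (fst (f2 w)) = true
  /\ g2 (f2 w) = w.
Proof.
  destruct w as [x [y z]]. cbn [ap3]. intro H. apply Z.eqb_eq in H.
  pose proof (tri2 x). pose proof (tri2 y). pose proof (tri2 z).
  assert (Hj : exists j, n = 4 * j + 2) by (exists (n / 4); zl).
  destruct Hj as [j Hj].
  assert (Hk : (x - z) * (x + z + 1) = 8 * (j - 3 * tri y - 4 * tri z) + 4) by lia.
  assert (Hp : (x - z + (x + z + 1)) mod 2 = 1) by zl.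
  destruct (prod48 _ _ _ Hk Hp) as [B1 B2].
  unfold f2. dtest; cbv beta iota zeta.
  - destruct (B1 ltac:(assumption)) as [k [Hk1 Hk2]]. clear B1 B2.
    replace ((2 * x + 1 - (2 * z + 1)) / 8) with k by zl.
    rest2 x y k (2 * z + 1) (z + 4 * k).
  - destruct (B2 ltac:(assumption)) as [k [Hk1 Hk2]]. clear B1 B2.
    replace ((2 * x + 1 - - (2 * z + 1)) / 8) with k by zl.
    rest2 x y k (- (2 * z + 1)) (- z - 1 + 4 * k).
Qed.

Lemma G2 n (hn : n mod 4 = 2) v s :
  ap3 (fun x y z => Z.eqb (2 * n + 7) (1 * x ^ 2 + 12 * y ^ 2 + 15 * z ^ 2)) v = true ->
  ap3 (fun x y z => Z.eqb n (1 * tri x + 12 * tri y + 15 * tri z)) (g2 (v, s)) = true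
  /\ f2 (g2 (v, s)) = (v, s).
Proof.
  destruct v as [v1 [v2 v3]]. cbn [ap3]. intro H. apply Z.eqb_eq in H.
  rewrite !Z.pow_2_r in H.
  assert (Hj : exists j, n = 4 * j + 2) by (exists (n / 4); zl).
  destruct Hj as [j Hj].
  destruct (par2 v1 v2 v3 (j + 1) ltac:(lia)) as [c [Hc [H3 Hc2]]].
  unfold g2. replace (v1 / 2) with c by zl.
  dtest; cbv beta iota zeta.
  -
    assert (HZ : exists Zp, c + 3 * v2 - - v3 = 2 * Zp /\ Zp mod 2 = 1)
      by (exists ((c + 3 * v2 - - v3) / 2); clear H; split; zl).
    destruct HZ as [Zp [HZ1 HZ2]].
    replace ((c + 3 * v2 - - v3) / 2) with Zp by zl.
    split.
    + apply P_of_odd; destruct s; zl.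
    + unfold f2. clear H. destruct s; cbv beta iota zeta; repeat (dtest; cbv beta iota zeta);
      try (exfalso; zl); f_equal; try f_equal; try f_equal; zl.
  - assert (HZ : exists Zp, c + 3 * v2 - v3 = 2 * Zp /\ Zp mod 2 = 1)
      by (exists ((c + 3 * v2 - v3) / 2); clear H; split; zl).
    destruct HZ as [Zp [HZ1 HZ2]].
    replace ((c + 3 * v2 - v3) / 2) with Zp by zl.
    split.
    + apply P_of_odd; destruct s; zl.
    + unfold f2. clear H. destruct s; cbv beta iota zeta; repeat (dtest; cbv beta iota zeta);
      try (exfalso; zl); f_equal; try f_equal; try f_equal; zl.
Qed.



Definition f3 (w : trip) : trip * bool :=
  let '(x, (y, z)) := w in
  let sY := Z.eqb ((x - y) mod 4) 0 in
  let Yp := if sY then 2*y+1 else -(2*y+1) in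
  let b := (2*x+1 - Yp) / 8 in
  let a := b + 2*Yp in
  let sZ := Z.eqb ((3*b - (2*z+1)) mod 4) 0 in
  let Zp := if sZ then 2*z+1 else -(2*z+1) in
  ((if sZ then a else -a, ((b + Zp)/2, (3*b - Zp)/4)), sY).

Definition g3 (p : trip * bool) : trip :=
  let '((v1, (v2, v3)), s) := p in
  let e := v2 / 2 in
  let b := e + v3 in
  let t := Z.eqb ((v1 - b) mod 4) 0 in
  let a := if t then -v1 else v1 in
  let Yp := (a - b) / 2 in
  let X := Yp + 8*b in
  let Zp := 3*e - v3 in
  let Y := if s then Yp else -Yp in
  let Z := if t then -Zp else Zp in
  ((X - 1)/2, ((Y - 1)/2, (Z - 1)/2)).

Ltac rest3 x z k Yp xe :=
  dtest;
  [ let He := fresh "He" in let d := fresh "d" in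
    assert (He : exists d, k + (2 * z + 1) = 4 * d) by (exists ((k + (2 * z + 1)) / 4); zl);
    destruct He as [d He];
    replace ((k + (2 * z + 1)) / 2) with (2 * d) by zl;
    replace ((3 * k - (2 * z + 1)) / 4) with (3 * d - (2*z+1)) by zl;
    split;
    [ apply Z.eqb_eq; assert (x = xe) by lia; assert (k = 4*d - (2*z+1)) by lia;
      subst x k; rewrite !Z.pow_2_r; lia
    | unfold g3; replace (2 * d / 2) with d by zl;
      dtest; [exfalso; zl|];
      f_equal; [|f_equal]; zl ]
  | let He := fresh "He" in let d := fresh "d" in
    assert (He : exists d, k - (2 * z + 1) = 4 * d) by (exists ((k - (2 * z + 1)) / 4); zl);
    destruct He as [d He];
    replace ((k + - (2 * z + 1)) / 2) with (2 * d) by zl;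
    replace ((3 * k - - (2 * z + 1)) / 4) with (3 * d + (2*z+1)) by zl;
    split;
    [ apply Z.eqb_eq; assert (x = xe) by lia; assert (k = 4*d + (2*z+1)) by lia;
      subst x k; rewrite !Z.pow_2_r; lia
    | unfold g3; replace (2 * d / 2) with d by zl;
      dtest; [|exfalso; zl];
      f_equal; [|f_equal]; zl ] ].

Lemma F3 n (hn : n mod 4 = 2) w :
  ap3 (fun x y z => Z.eqb n (1 * tri x + 15 * tri y + 20 * tri z)) w = true ->
  ap3 (fun x y z => Z.eqb (2 * n + 9) (1 * x ^ 2 + 15 * y ^ 2 + 20 * z ^ 2)) (fst (f3 w)) = true
  /\ g3 (f3 w) = w.
Proof.
  destruct w as [x [y z]]. cbn [ap3]. intro H. apply Z.eqb_eq in H.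
  pose proof (tri2 x). pose proof (tri2 y). pose proof (tri2 z).
  assert (Hj : exists j, n = 4 * j + 2) by (exists (n / 4); zl).
  destruct Hj as [j Hj].
  assert (Hk : (x - y) * (x + y + 1) = 8 * (j - 4 * tri y - 5 * tri z) + 4) by lia.
  assert (Hp : (x - y + (x + y + 1)) mod 2 = 1) by zl.
  destruct (prod48 _ _ _ Hk Hp) as [B1 B2].
  unfold f3. dtest; cbv beta iota zeta.
  - destruct (B1 ltac:(assumption)) as [k [Hk1 Hk2]]. clear B1 B2.
    replace ((2 * x + 1 - (2 * y + 1)) / 8) with k by zl.
    rest3 x z k (2 * y + 1) (y + 4 * k).
  - destruct (B2 ltac:(assumption)) as [k [Hk1 Hk2]]. clear B1 B2.
    replace ((2 * x + 1 - - (2 * y + 1)) / 8) with k by zl.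
    rest3 x z k (- (2 * y + 1)) (- y - 1 + 4 * k).
Qed.

Lemma par3 v1 v2 v3 j : v1*v1 + 15*(v2*v2) + 20*(v3*v3) = 8*j+5 ->
  v1 mod 2 = 1 /\ exists e, v2 = 2*e /\ (e + v3) mod 2 = 1.
Proof.
  intro H. par v1; par v2; par v3; try lia.
  - split; [zl|]. exists p0. par p0; split; try lia; zl.
  - split; [zl|]. exists p0. par p0; split; try lia; zl.
Qed.

Lemma G3 n (hn : n mod 4 = 2) v s :
  ap3 (fun x y z => Z.eqb (2 * n + 9) (1 * x ^ 2 + 15 * y ^ 2 + 20 * z ^ 2)) v = true ->
  ap3 (fun x y z => Z.eqb n (1 * tri x + 15 * tri y + 20 * tri z)) (g3 (v, s)) = true
  /\ f3 (g3 (v, s)) = (v, s).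
Proof.
  destruct v as [v1 [v2 v3]]. cbn [ap3]. intro H. apply Z.eqb_eq in H.
  rewrite !Z.pow_2_r in H.
  assert (Hj : exists j, n = 4 * j + 2) by (exists (n / 4); zl).
  destruct Hj as [j Hj].
  destruct (par3 v1 v2 v3 (j + 1) ltac:(lia)) as [H1 [e [He He2]]].
  unfold g3. replace (v2 / 2) with e by zl.
  dtest; cbv beta iota zeta.
  - assert (HY : exists Yp, - v1 - (e + v3) = 2 * Yp /\ Yp mod 2 = 1)
      by (exists ((- v1 - (e + v3)) / 2); clear H; split; zl).
    destruct HY as [Yp [HY1 HY2]].
    replace ((- v1 - (e + v3)) / 2) with Yp by zl.
    split.
    + apply P_of_odd; destruct s; zl.
    + unfold f3. clear H. destruct s; cbv beta iota zeta; repeat (dtest; cbv beta iota zeta);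
      try (exfalso; zl); f_equal; try f_equal; try f_equal; zl.
  - assert (HY : exists Yp, v1 - (e + v3) = 2 * Yp /\ Yp mod 2 = 1)
      by (exists ((v1 - (e + v3)) / 2); clear H; split; zl).
    destruct HY as [Yp [HY1 HY2]].
    replace ((v1 - (e + v3)) / 2) with Yp by zl.
    split.
    + apply P_of_odd; destruct s; zl.
    + unfold f3. clear H. destruct s; cbv beta iota zeta; repeat (dtest; cbv beta iota zeta);
      try (exfalso; zl); f_equal; try f_equal; try f_equal; zl.
Qed.

Lemma case3 n : 0 < n -> n mod 4 = 2 ->
  trep 1 15 20 n = (2 * Nrep 1 15 20 (2 * n + 9))%nat.
Proof.
  intros hn hm. unfold trep, Nrep. apply count_bij2 with (f := f3) (g := g3).
  - intros x y z H. apply (boundP 1 15 20); auto; lia.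
  - intros x y z H. apply (boundQ 1 15 20); auto; lia.
  - intros w Hw. now apply F3.
  - intros v s Hv. now apply G3.
Qed.



Definition f4 (w : trip) : trip * bool :=
  let '(x, (y, z)) := w in
  let sZ := Z.eqb ((x - z) mod 4) 0 in
  let Zp := if sZ then 2*z+1 else -(2*z+1) in
  let b := (2*x+1 - Zp) / 8 in
  let a := b + 2*Zp in
  let sY := Z.eqb ((a + (2*y+1)) mod 4) 0 in
  let Yp := if sY then 2*y+1 else -(2*y+1) in
  (((a + Yp)/2, ((3*a - Yp)/4, if sY then b else -b)), sZ).

Definition g4 (p : trip * bool) : trip :=
  let '((v1, (v2, v3)), s) := p in
  let c := v1 / 2 in
  let A := c + v2 in
  let t := Z.eqb ((A - v3) mod 4) 0 in
  let u3 := if t then -v3 else v3 in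
  let Zp := (A - u3) / 2 in
  let X := Zp + 8*u3 in
  let Ypp := 3*c - v2 in
  let Y := if t then -Ypp else Ypp in
  let Z := if s then Zp else -Zp in
  ((X - 1)/2, ((Y - 1)/2, (Z - 1)/2)).

Ltac rest4 x y k Zp xe :=
  dtest;
  [ let He := fresh "He" in let e := fresh "e" in
    assert (He : exists e, k + 2 * Zp + (2 * y + 1) = 4 * e) by (exists ((k + 2 * Zp + (2 * y + 1)) / 4); zl);
    destruct He as [e He];
    replace ((k + 2 * Zp + (2 * y + 1)) / 2) with (2 * e) by zl;
    replace ((3 * (k + 2 * Zp) - (2 * y + 1)) / 4) with (3 * e - (2*y+1)) by zl;
    split;
    [ apply Z.eqb_eq; assert (x = xe) by lia; assert (k = 4*e - (2*y+1) - 2*Zp) by lia;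
      subst x k; rewrite !Z.pow_2_r; lia
    | unfold g4; replace (2 * e / 2) with e by zl;
      dtest; [exfalso; zl|];
      f_equal; [|f_equal]; zl ]
  | let He := fresh "He" in let e := fresh "e" in
    assert (He : exists e, k + 2 * Zp - (2 * y + 1) = 4 * e) by (exists ((k + 2 * Zp - (2 * y + 1)) / 4); zl);
    destruct He as [e He];
    replace ((k + 2 * Zp + - (2 * y + 1)) / 2) with (2 * e) by zl;
    replace ((3 * (k + 2 * Zp) - - (2 * y + 1)) / 4) with (3 * e + (2*y+1)) by zl;
    split;
    [ apply Z.eqb_eq; assert (x = xe) by lia; assert (k = 4*e + (2*y+1) - 2*Zp) by lia;
      subst x k; rewrite !Z.pow_2_r; lia
    | unfold g4; replace (2 * e / 2) with e by zl;
      dtest; [|exfalso; zl];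
      f_equal; [|f_equal]; zl ] ].

Lemma F4 n (hn : n mod 4 = 2) w :
  ap3 (fun x y z => Z.eqb n (3 * tri x + 4 * tri y + 45 * tri z)) w = true ->
  ap3 (fun x y z => Z.eqb (2 * n + 13) (3 * x ^ 2 + 4 * y ^ 2 + 45 * z ^ 2)) (fst (f4 w)) = true
  /\ g4 (f4 w) = w.
Proof.
  destruct w as [x [y z]]. cbn [ap3]. intro H. apply Z.eqb_eq in H.
  pose proof (tri2 x). pose proof (tri2 y). pose proof (tri2 z).
  assert (Hj : exists j, n = 4 * j + 2) by (exists (n / 4); zl).
  destruct Hj as [j Hj].
  assert (Hk0 : 3 * ((x - z) * (x + z + 1)) = 8 * (j - tri y - 12 * tri z) + 4) by lia.
  assert (Hk : exists t, (x - z) * (x + z + 1) = 8 * t + 4)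
    by (exists (((x - z) * (x + z + 1) - 4) / 8); zl).
  destruct Hk as [t Hk].
  assert (Hp : (x - z + (x + z + 1)) mod 2 = 1) by zl.
  destruct (prod48 _ _ _ Hk Hp) as [B1 B2].
  unfold f4. dtest; cbv beta iota zeta.
  - destruct (B1 ltac:(assumption)) as [k [Hk1 Hk2]]. clear B1 B2.
    replace ((2 * x + 1 - (2 * z + 1)) / 8) with k by zl.
    rest4 x y k (2 * z + 1) (z + 4 * k).
  - destruct (B2 ltac:(assumption)) as [k [Hk1 Hk2]]. clear B1 B2.
    replace ((2 * x + 1 - - (2 * z + 1)) / 8) with k by zl.
    rest4 x y k (- (2 * z + 1)) (- z - 1 + 4 * k).
Qed.

Lemma par4 v1 v2 v3 j : 3*(v1*v1) + 4*(v2*v2) + 45*(v3*v3) = 8*j+1 ->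
  exists c, v1 = 2*c /\ v3 mod 2 = 1 /\ (c + v2) mod 2 = 1.
Proof.
  intro H. par v1; par v2; par v3; try lia.
  - exists p. par p; split; try lia; split; zl.
  - exists p. par p; split; try lia; split; zl.
Qed.

Lemma G4 n (hn : n mod 4 = 2) v s :
  ap3 (fun x y z => Z.eqb (2 * n + 13) (3 * x ^ 2 + 4 * y ^ 2 + 45 * z ^ 2)) v = true ->
  ap3 (fun x y z => Z.eqb n (3 * tri x + 4 * tri y + 45 * tri z)) (g4 (v, s)) = true
  /\ f4 (g4 (v, s)) = (v, s).
Proof.
  destruct v as [v1 [v2 v3]]. cbn [ap3]. intro H. apply Z.eqb_eq in H.
  rewrite !Z.pow_2_r in H.
  assert (Hj : exists j, n = 4 * j + 2) by (exists (n / 4); zl).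
  destruct Hj as [j Hj].
  destruct (par4 v1 v2 v3 (j + 2) ltac:(lia)) as [c [Hc [H3 Hc2]]].
  unfold g4. replace (v1 / 2) with c by zl.
  dtest; cbv beta iota zeta.
  - assert (HZ : exists Zp, c + v2 - - v3 = 2 * Zp /\ Zp mod 2 = 1)
      by (exists ((c + v2 - - v3) / 2); clear H; split; zl).
    destruct HZ as [Zp [HZ1 HZ2]].
    replace ((c + v2 - - v3) / 2) with Zp by zl.
    split.
    + apply P_of_odd; destruct s; zl.
    + unfold f4. clear H. destruct s; cbv beta iota zeta; repeat (dtest; cbv beta iota zeta);
      try (exfalso; zl); f_equal; try f_equal; try f_equal; zl.
  - assert (HZ : exists Zp, c + v2 - v3 = 2 * Zp /\ Zp mod 2 = 1)
      by (exists ((c + v2 - v3) / 2); clear H; split; zl).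
    destruct HZ as [Zp [HZ1 HZ2]].
    replace ((c + v2 - v3) / 2) with Zp by zl.
    split.
    + apply P_of_odd; destruct s; zl.
    + unfold f4. clear H. destruct s; cbv beta iota zeta; repeat (dtest; cbv beta iota zeta);
      try (exfalso; zl); f_equal; try f_equal; try f_equal; zl.
Qed.

Lemma case4 n : 0 < n -> n mod 4 = 2 ->
  trep 3 4 45 n = (2 * Nrep 3 4 45 (2 * n + 13))%nat.
Proof.
  intros hn hm. unfold trep, Nrep. apply count_bij2 with (f := f4) (g := g4).
  - intros x y z H. apply (boundP 3 4 45); auto; lia.
  - intros x y z H. apply (boundQ 3 4 45); auto; lia.
  - intros w Hw. now apply F4.
  - intros v s Hv. now apply G4.
Qed.


Lemma case2 n : 0 < n -> n mod 4 = 2 ->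
  trep 1 12 15 n = (2 * Nrep 1 12 15 (2 * n + 7))%nat.
Proof.
  intros hn hm. unfold trep, Nrep. apply count_bij2 with (f := f2) (g := g2).
  - intros x y z H. apply (boundP 1 12 15); auto; lia.
  - intros x y z H. apply (boundQ 1 12 15); auto; lia.
  - intros w Hw. now apply F2.
  - intros v s Hv. now apply G2.
Qed.

Theorem theorem6p2 (n : Z) (hn : 0 < n) :
  (n mod 4 = 0 -> trep 1 4 15 n = (2 * Nrep 1 4 15 (2 * n + 5))%nat) /\
  (n mod 4 = 2 -> trep 1 12 15 n = (2 * Nrep 1 12 15 (2 * n + 7))%nat) /\
  (n mod 4 = 2 -> trep 1 15 20 n = (2 * Nrep 1 15 20 (2 * n + 9))%nat) /\
  (n mod 4 = 2 -> trep 3 4 45 n = (2 * Nrep 3 4 45 (2 * n + 13))%nat).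
Proof.
  split; [|split; [|split]]; intro hm.
  - now apply case1.
  - now apply case2.
  - now apply case3.
  - now apply case4.
Qed.
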